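(* Let $f:\Gamma_+\to\mathbb{R}$ be a smooth function which is homogeneous of degree one. Then $f\in\mathcal{C}_n$ if and only if the following hold everywhere on $\Gamma_+$: (1) $\dot f^i=\frac{\partial f}{\partial x_i}>0$ for each $i$; (2) the matrix $\ddot f^{ij}=\frac{\partial^2 f}{\partial x_i\partial x_j}$ is non-positive (negative semidefinite); (3) the matrix $\ddot f^{ij}+2\frac{\dot f^i}{x_i}\delta_{ij}$ is non-negative (positive semidefinite).
   Context: $\Gamma_+=\{x\in\mathbb{R}^n: x_i>0\ \forall i\}$. $\mathcal{C}_n$ is the class of functions $f:\Gamma_+\to\mathbb{R}$ which are $C^\infty$, homogeneous of degree one ($f(cx)=cf(x)$ for $c>0$), strictly monotone increasing ($\partial f/\partial x_i>0$ for each $i$), concave, and inverse-concave, meaning that $f^*(x_1,\dots,x_n)=-f(x_1^{-1},\dots,x_n^{-1})$ is concave on $\Gamma_+$. *)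

(* Defs.v *)
From HB Require Import structures.
From mathcomp Require Import all_boot all_order all_algebra.
From mathcomp Require Import all_classical all_reals all_analysis.
Set Implicit Arguments. Unset Strict Implicit. Unset Printing Implicit Defensive.
Import Order.TTheory GRing.Theory Num.Theory.
Import numFieldNormedType.Exports.
Local Open Scope ring_scope.
Local Open Scope classical_set_scope.

Section Defs.
Variables (R : realType) (n : nat).
Notation V := 'rV[R]_n.

Definition Gamma_plus : set V := [set x | forall i : 'I_n, 0 < x 0 i].

Definition ebasis (i : 'I_n) : V := delta_mx 0 i.

Definition pd (i : 'I_n) (f : V -> R) : V -> R := 'D_(ebasis i) f.

Definition iter_deriv (vs : seq V) (f : V -> R) : V -> R :=
  foldr (fun v g => 'D_v g) f vs.

Definition smooth_on (D : set V) (f : V -> R) : Prop :=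
  forall (vs : seq V) (x : V), D x ->
    {for x, continuous (iter_deriv vs f)} /\
    forall v : V, derivable (iter_deriv vs f) x v.

Definition homogeneous1 (f : V -> R) : Prop :=
  forall (x : V) (c : R), Gamma_plus x -> 0 < c -> f (c *: x) = c * f x.

Definition strictly_increasing (f : V -> R) : Prop :=
  forall x, Gamma_plus x -> forall i : 'I_n, 0 < pd i f x.

Definition concave_on (D : set V) (f : V -> R) : Prop :=
  forall (x y : V) (t : R), D x -> D y -> 0 <= t -> t <= 1 ->
    (1 - t) * f x + t * f y <= f ((1 - t) *: x + t *: y).

Definition vinv (x : V) : V := \row_i (x 0 i)^-1.

Definition fstar (f : V -> R) : V -> R := fun x => - f (vinv x).

Definition inverse_concave (f : V -> R) : Prop :=
  concave_on Gamma_plus (fstar f).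

Definition class_C (f : V -> R) : Prop :=
  [/\ smooth_on Gamma_plus f, homogeneous1 f, strictly_increasing f,
      concave_on Gamma_plus f & inverse_concave f].

Definition hessian (f : V -> R) (x : V) : 'M[R]_n :=
  \matrix_(i, j) pd i (pd j f) x.

Definition nonpos_mx (A : 'M[R]_n) : Prop :=
  forall v : V, (v *m A *m v^T) 0 0 <= 0.
Definition nonneg_mx (A : 'M[R]_n) : Prop :=
  forall v : V, 0 <= (v *m A *m v^T) 0 0.

End Defs.

(* Main.v *)
Require Import Defs.
From HB Require Import structures.
From mathcomp Require Import all_boot all_order all_algebra.
From mathcomp Require Import all_classical all_reals all_analysis.
From mathcomp Require Import ring lra.
Import Order.TTheory GRing.Theory Num.Theory.
Import numFieldNormedType.Exports.
Local Open Scope ring_scope.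
Section OneD.
Local Open Scope classical_set_scope.
Variable R : realType.

Lemma slope_cmp (p q X Y : R) : 0 < p -> 0 < q -> Y * p <= X * q -> Y / q <= X / p.
Proof.
move=> p0 q0 h.
rewrite ler_pdivrMr // mulrAC ler_pdivlMr //.
Qed.

Lemma three_slope (u v w A B C : R) : u < v -> v < w ->
  (w - v) * A + (v - u) * C <= (w - u) * B ->
  (C - A) / (w - u) <= (B - A) / (v - u) /\ (C - B) / (w - v) <= (C - A) / (w - u).
Proof.
move=> uv vw h; split; apply: slope_cmp; rewrite ?subr_gt0 //; lra.
Qed.

Lemma nincr_D1_le0 (psi : R -> R) d : 0 < d -> derivable psi 0 1 ->
  (forall a b, -d < a -> a < b -> b < d -> psi b <= psi a) -> 'D_1 psi 0 <= 0.
Proof.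
move=> d0 dpsi nincr.
apply: limr_le; first exact: dpsi.
near=> h.
have h0 : h != 0 by near: h; exact: nbhs_dnbhs_neq.
have hd : `|h| < d by near: h; exact: dnbhs0_lt.
rewrite /= [h *: 1]mulr1 addr0.
have -> : h^-1 *: (psi h - psi 0) = h^-1 * (psi h - psi 0) by [].
move: hd; rewrite ltr_norml => /andP[h1 h2].
move: h0; rewrite neq_lt => /orP[hn|hp].
- rewrite nmulr_rle0 ?invr_lt0 // subr_ge0 nincr //; lra.
- rewrite pmulr_rle0 ?invr_gt0 // subr_le0 nincr //; lra.
Unshelve. all: by end_near. Qed.
Definition conc_on (phi : R -> R) d := forall a b t, -d < a < d -> -d < b < d ->
  0 <= t <= 1 -> (1 - t) * phi a + t * phi b <= phi ((1 - t) * a + t * b).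

Lemma conc_three (phi : R -> R) d u v w : conc_on phi d -> -d < u -> u < v -> v < w -> w < d ->
  (phi w - phi u) / (w - u) <= (phi v - phi u) / (v - u) /\
  (phi w - phi v) / (w - v) <= (phi w - phi u) / (w - u).
Proof.
move=> hc du uv vw wd; apply: three_slope => //.
have wu : w - u != 0 by rewrite subr_eq0 gt_eqF //; lra.
pose t := (v - u) / (w - u).
have t0 : 0 <= t by rewrite /t divr_ge0 //; lra.
have t1 : t <= 1 by rewrite /t ler_pdivrMr; lra.
have := hc u w t.
have -> : (1 - t) * u + t * w = v by rewrite /t; field.
move=> /(_ _ _ _) h.
have {h} h : (1 - t) * phi u + t * phi w <= phi v by apply: h; apply/andP; split; lra.
have -> : (w - v) * phi u + (v - u) * phi w = (w - u) * ((1 - t) * phi u + t * phi w).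
  by rewrite /t; field.
by rewrite ler_pM2l //; lra.
Qed.
Lemma conc_D1_ge (phi : R -> R) d a b : conc_on phi d -> -d < a -> a < b -> b < d ->
  derivable phi a 1 -> (phi b - phi a) / (b - a) <= 'D_1 phi a.
Proof.
move=> hc da ab bd dphi.
apply: limr_ge; first exact: dphi.
near=> h.
have h0 : h != 0 by near: h; exact: nbhs_dnbhs_neq.
have hd1 : `|h| < b - a by near: h; apply: dnbhs0_lt; lra.
have hd2 : `|h| < a + d by near: h; apply: dnbhs0_lt; lra.
rewrite /= [h *: 1]mulr1.
have -> : h^-1 *: (phi (h + a) - phi a) = h^-1 * (phi (h + a) - phi a) by [].
move: hd1 hd2; rewrite !ltr_norml => /andP[h1 h2] /andP[h3 h4].
move: h0; rewrite neq_lt => /orP[hn|hp].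
- case: (@conc_three phi d (h + a) a b hc _ _ ab bd); [lra|lra|move=> H1 H2].
  have -> : h^-1 * (phi (h + a) - phi a) = (phi a - phi (h + a)) / (a - (h + a)).
    by field; repeat (apply/andP; split); apply/negP => /eqP H; lra.
  by apply: le_trans H1; apply: H2; lra.
- case: (@conc_three phi d a (h + a) b hc da _ _ bd); [lra|lra|move=> H1 H2].
  have -> : h^-1 * (phi (h + a) - phi a) = (phi (h + a) - phi a) / (h + a - a).
    by field; repeat (apply/andP; split); apply/negP => /eqP H; lra.
  by apply: H1; lra.
Unshelve. all: by end_near. Qed.
Lemma conc_D1_le (phi : R -> R) d a b : conc_on phi d -> -d < a -> a < b -> b < d ->
  derivable phi b 1 -> 'D_1 phi b <= (phi b - phi a) / (b - a).
Proof.
move=> hc da ab bd dphi.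
apply: limr_le; first exact: dphi.
near=> h.
have h0 : h != 0 by near: h; exact: nbhs_dnbhs_neq.
have hd1 : `|h| < b - a by near: h; apply: dnbhs0_lt; lra.
have hd2 : `|h| < d - b by near: h; apply: dnbhs0_lt; lra.
rewrite /= [h *: 1]mulr1.
have -> : h^-1 *: (phi (h + b) - phi b) = h^-1 * (phi (h + b) - phi b) by [].
move: hd1 hd2; rewrite !ltr_norml => /andP[h1 h2] /andP[h3 h4].
move: h0; rewrite neq_lt => /orP[hn|hp].
- case: (@conc_three phi d a (h + b) b hc da _ _ bd); [lra|lra|move=> H1 H2].
  have -> : h^-1 * (phi (h + b) - phi b) = (phi b - phi (h + b)) / (b - (h + b)).
    by field; repeat (apply/andP; split); apply/negP => /eqP H; lra.
  exact: H2.
- case: (@conc_three phi d a b (h + b) hc da ab _ _); [lra|lra|move=> H1 H2].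
  have -> : h^-1 * (phi (h + b) - phi b) = (phi (h + b) - phi b) / (h + b - b).
    by field; repeat (apply/andP; split); apply/negP => /eqP H; lra.
  exact: le_trans H2 H1.
Unshelve. all: by end_near. Qed.

Lemma concave_D2_le0 (phi : R -> R) d : 0 < d -> conc_on phi d ->
  (forall s, -d < s -> s < d -> derivable phi s 1) ->
  derivable ('D_1 phi) 0 1 -> 'D_1 ('D_1 phi) 0 <= 0.
Proof.
move=> d0 hc dphi ddphi.
apply: (@nincr_D1_le0 _ d) => // a b da ab bd.
apply: (@le_trans _ _ ((phi b - phi a) / (b - a))).
  apply: (@conc_D1_le _ d) => //; apply: dphi; lra.
apply: (@conc_D1_ge _ d) => //; apply: dphi; lra.
Qed.
Lemma D2_le0_concave (phi : R -> R) :
  (forall s, 0 <= s <= 1 -> derivable phi s 1) ->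
  (forall s, 0 < s < 1 -> derivable ('D_1 phi) s 1 /\ 'D_1 ('D_1 phi) s <= 0) ->
  forall t, 0 <= t <= 1 -> (1 - t) * phi 0 + t * phi 1 <= phi t.
Proof.
move=> dphi ddphi t /andP[t0 t1].
pose F := fun s => - phi s.
have cphi (s : R) : 0 <= s <= 1 -> {for s, continuous phi}.
  by move=> /dphi /derivable1_diffP /differentiable_continuous.
have eqD (s : R) : 0 < s < 1 -> \near s, 'D_1 F s = - 'D_1 phi s.
  move=> /andP[s0 s1]; near=> u.
  have u0 : 0 < u by near: u; exact: lt_nbhsr.
  have u1 : u < 1 by near: u; exact: lt_nbhsl.
  by rewrite /F deriveN //; apply: dphi; apply/andP; split; lra.
have tt0 : 0 <= 1 - t by lra.
have tt1 : 1 - t <= 1 by lra.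
have := @second_derivative_convex R F 0 1 _ _ _ _ _ (Itv01 tt0 tt1) ler01.
rewrite !convRE /= /F.
have -> : (1 - t) * 0 + (1 - (1 - t)) * 1 = t by ring.
rewrite /unstable.onem (_ : 1 - (1 - t) = t); last by ring.
move=> h.
have H : - phi t <= (1 - t) * - phi 0 + t * - phi 1.
  apply: h.
  - move=> x x01; rewrite (@near_eq_derive R R R _ _ x 1 (eqD x x01)) deriveN.
      by rewrite oppr_ge0; case: (ddphi x x01).
    by case: (ddphi x x01).
  - apply: cvg_at_left_filter; apply: cvgN; apply: cphi; lra.
  - apply: cvg_at_right_filter; apply: cvgN; apply: cphi; lra.
  - move=> x; rewrite in_itv /= => /andP[x0 x1]; apply: derivableN; apply: dphi.
    by apply/andP; split; lra.
  - move=> x; rewrite in_itv /= => x01.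
    apply: (near_eq_derivable _ _ (v:=1) (f := fun s => - 'D_1 phi s)).
      by near do rewrite (near (eqD x x01)) //.
    by apply: derivableN; case: (ddphi x x01).
lra.
Unshelve. all: by end_near. Qed.
Lemma MVT0 (psi : R -> R) b : (forall s, `|s| <= `|b| -> derivable psi s 1) ->
  exists c, `|c| <= `|b| /\ psi b - psi 0 = 'D_1 psi c * b.
Proof.
move=> dpsi.
have cont (a c : R) : (forall s, a <= s <= c -> `|s| <= `|b|) ->
    {within `[a, c], continuous psi}.
  move=> hs; apply: continuous_in_subspaceT => z; rewrite inE /= in_itv /= => hz.
  by apply: differentiable_continuous; apply/derivable1_diffP; apply: dpsi; apply: hs.
have [b0|b0] := leP 0 b.
- have [||c] := @MVT_segment R psi ('D_1 psi) 0 b b0.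
  + move=> z; rewrite in_itv /= => /andP[z0 z1]; apply: derivableP; apply: dpsi.
    by rewrite !ger0_norm //; lra.
  + by apply: cont => s /andP[s0 s1]; rewrite !ger0_norm //; lra.
  rewrite in_itv /= => /andP[c0 c1] ->; exists c; split; last by rewrite subr0.
  by rewrite !ger0_norm //; lra.
- have [||c] := @MVT_segment R psi ('D_1 psi) b 0 (ltW b0).
  + move=> z; rewrite in_itv /= => /andP[z0 z1]; apply: derivableP; apply: dpsi.
    by rewrite !ltr0_norm //; lra.
  + by apply: cont => s /andP[s0 s1]; rewrite (ltr0_norm b0); rewrite ler_norml; lra.
  rewrite in_itv /= => /andP[c0 c1] h; exists c; split.
    by rewrite (ltr0_norm b0) ler_norml; lra.
  by rewrite -[LHS]opprB h; ring.
Qed.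
End OneD.
Section S.
Local Open Scope classical_set_scope.
Variables (R : realType) (n : nat).
Notation V := 'rV[R]_n.
Lemma entry_le_norm (v : V) i : `|v 0 i| <= `|v|.
Proof.
rewrite [leRHS]/Num.norm /= mx_normrE; apply/bigmax_geP; right => /=.
by exists (0, i).
Qed.
Lemma ball_entry i (x y : V) e : ball x e y -> `|x 0 i - y 0 i| < e.
Proof. rewrite -ball_normE /= => h; apply: le_lt_trans h.
by have := entry_le_norm (x - y) i; rewrite !mxE. Qed.
Lemma GP_nbhs (x : V) : Gamma_plus x -> nbhs x (@Gamma_plus R n).
Proof.
move=> Hx.
have : nbhs x (fun y : V => forall i : 'I_n, 0 < y 0 i).
  apply: (@filter_forall V 'I_n (fun i (y : V) => 0 < y 0 i) (nbhs x) (nbhs_filter x)) => i.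
apply/nbhs_ballP; exists (x 0 i) => //= y /(ball_entry i).
  move=> h; move: (Hx i) h; rewrite ltr_norml; lra.
by apply: filterS.
Qed.
Lemma norm_le_entries (v : V) e : 0 <= e -> (forall i, `|v 0 i| <= e) -> `|v| <= e.
Proof.
move=> e0 h; rewrite [leLHS]/Num.norm /= mx_normrE; apply: bigmax_le => // -[i j] _ /=.
by rewrite (ord1 i); apply: h.
Qed.

Lemma line_fun_eq (g : V -> R) (z v : V) (t : R) :
  (fun h : R => h^-1 *: (((fun s : R => g (s *: v + z)) \o shift t) (h *: 1) - g (t *: v + z)))
  = (fun h : R => h^-1 *: ((g \o shift (t *: v + z)) (h *: v) - g (t *: v + z))).
Proof.
apply/funext => h /=; congr (_ *: (g _ - _)).
by rewrite [h *: 1]mulr1 scalerDl addrA.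
Qed.
Lemma line_derive (g : V -> R) (z v : V) (t : R) :
  'D_1 (fun s : R => g (s *: v + z)) t = 'D_v g (t *: v + z).
Proof. by rewrite /derive line_fun_eq. Qed.
Lemma line_derivable (g : V -> R) (z v : V) (t : R) :
  derivable (fun s : R => g (s *: v + z)) t 1 <-> derivable g (t *: v + z) v.
Proof. by rewrite /derivable line_fun_eq. Qed.
Lemma line_D1 (g : V -> R) (z v : V) :
  'D_1 (fun s : R => g (s *: v + z)) = (fun s : R => 'D_v g (s *: v + z)).
Proof. by apply/funext => s; rewrite line_derive. Qed.

Lemma concave_iff (D : set V) (g : V -> R) :
  (forall z, D z -> nbhs z D) ->
  (forall x y t, D x -> D y -> 0 <= t <= 1 -> D ((1 - t) *: x + t *: y)) ->
  (forall z v, D z -> derivable g z v /\ derivable ('D_v g) z v) ->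
  concave_on D g <-> forall z v, D z -> 'D_v ('D_v g) z <= 0.
Proof.
move=> Dopen Dconv Dder; split.
- move=> gc z v Dz.
  have /nbhs_ballP[d d0 dD] := Dopen z Dz.
  pose del := d / (`|v| + 1).
  have del0 : 0 < del by rewrite divr_gt0 // ltr_wpDl.
  have inD (s : R) : -del < s < del -> D (s *: v + z).
    move=> /andP[s1 s2]; apply: dD; rewrite -ball_normE /= opprD addrCA subrr addr0 normrN normrZ.
    have hs : `|s| < del by rewrite ltr_norml s1 s2.
    have : `|s| * (`|v| + 1) < d by rewrite -ltr_pdivlMr // ltr_wpDl.
    have := normr_ge0 s; nra.
  pose phi := fun s : R => g (s *: v + z).
  have -> : z = 0 *: v + z by rewrite scale0r add0r.
  rewrite -line_derive -line_D1.
  apply: (@concave_D2_le0 _ phi del) => //.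
  + move=> a b t ha hb /andP[t0 t1].
    rewrite /phi.
    have -> : ((1 - t) * a + t * b) *: v + z = (1 - t) *: (a *: v + z) + t *: (b *: v + z).
      by rewrite !scalerDr !scalerA scalerDl addrACA -[(1 - t) *: z + _]scalerDl subrK scale1r.
    by apply: gc => //; apply: inD.
  + move=> s s1 s2; apply/line_derivable; have [] := Dder (s *: v + z) v (inD s _) => //.
    by apply/andP.
  + rewrite line_D1; apply/(@line_derivable (fun w => 'D_v g w)); rewrite scale0r add0r.
    by have [] := Dder z v Dz.
- move=> H x y t Dx Dy t0 t1.
  pose phi := fun s : R => g (s *: (y - x) + x).
  have eqp (s : R) : s *: (y - x) + x = (1 - s) *: x + s *: y.
    by apply/rowP => i; rewrite !mxE; ring.
  have inD (s : R) : 0 <= s <= 1 -> D (s *: (y - x) + x) by move=> hs; rewrite eqp; apply: Dconv.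
  have := @D2_le0_concave _ phi _ _ t.
  rewrite /phi !eqp subr0 subrr !scale0r addr0 add0r !scale1r; apply.
  + by move=> s hs; apply/line_derivable; have [] := Dder _ (y - x) (inD s hs).
  + move=> s /andP[s0 s1]; rewrite line_D1; split.
      apply/(@line_derivable (fun w => 'D_(y - x) g w)).
      have [] := Dder _ (y - x) (inD s _) => //.
      by apply/andP; split; apply: ltW.
    rewrite (@line_derive (fun w => 'D_(y - x) g w)); apply: H; apply: inD.
    by apply/andP; split; apply: ltW.
  + by apply/andP.
Qed.
Definition Pk (k : nat) (h : V) : V := \row_j (if (j < k)%N then h 0 j else 0).

Lemma Pk0 h : Pk 0 h = 0.
Proof. by apply/rowP => j; rewrite !mxE. Qed.

Lemma Pkn h : Pk n h = h.
Proof. by apply/rowP => j; rewrite !mxE ltn_ord. Qed.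

Lemma PkS (i : 'I_n) h : Pk i.+1 h = Pk i h + h 0 i *: ebasis R i.
Proof.
apply/rowP => j; rewrite !mxE /= ltnS leq_eqVlt.
have [ji|jni] := eqVneq j i; first by rewrite ji eqxx ltnn mulr1 add0r.
have -> : (nat_of_ord j == nat_of_ord i) = false.
  by apply/negP => /eqP/val_inj/eqP; rewrite (negPf jni).
by rewrite mulr0 addr0.
Qed.

Lemma Pk_norm (i : 'I_n) (h : V) (c : R) : `|c| <= `|h 0 i| -> `|Pk i h + c *: ebasis R i| <= `|h|.
Proof.
move=> hc; apply: norm_le_entries => // j; rewrite !mxE /=.
have [ji|jni] := eqVneq j i.
  by rewrite ji ltnn mulr1 add0r (le_trans hc) // entry_le_norm.
rewrite mulr0 addr0; case: ifP => _; last by rewrite normr0.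
exact: entry_le_norm.
Qed.
Lemma C1_diff (g : V -> R) (x : V) r : 0 < r ->
  (forall y, ball x r y -> forall i, derivable g y (ebasis R i)) ->
  (forall i, {for x, continuous (pd i g)}) ->
  differentiable g x.
Proof.
move=> r0 dg cg.
pose a i := pd i g x.
pose Lf := fun h : V => \sum_i h 0 i * a i.
have Llin : linear Lf.
  move=> k u v; rewrite /Lf scaler_sumr -big_split; apply: eq_bigr => i _.
  by rewrite !mxE mulrDl /GRing.scale /= mulrA.
pose LM := GRing.isLinear.Build R V R *:%R Lf Llin.
pose L : {linear V -> R} := HB.pack Lf LM.
have Lc : continuous L.
  move=> y; apply: differentiable_continuous.
  rewrite (_ : (L : V -> R) = \sum_i (fun h : V => h 0 i * a i)); last by rewrite fct_sumE.
  apply: differentiable_sum => i; apply: differentiableM => //.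
  exact: differentiable_coord.
have Hexp : g \o shift x = cst (g x) + (L : V -> R) +o_ (0 : V) id.
  apply/eqaddoP => eps eps0.
  pose e' := eps / (n%:R + 1).
  have e'0 : 0 < e' by rewrite divr_gt0 // ltr_wpDl.
  have cg' (i : 'I_n) : \forall y \near x, `|a i - pd i g y| < e'.
    by move/cvgrPdist_lt: (cg i) => /(_ e' e'0).
  have H : nbhs x (fun y : V => ball x r y /\ forall i, `|a i - pd i g y| < e').
    apply: filterI; first exact: nbhsx_ballx.
    exact: (@filter_forall V 'I_n (fun i (y : V) => `|a i - pd i g y| < e') (nbhs x) (nbhs_filter x)).
  have /nbhs_ballP[del del0 delH] := H.
  near=> h.
  have hd : ball (0 : V) del h by near: h; apply: nbhsx_ballx.
  have hd' : `|h| < del by move: hd; rewrite -ball_normE /= sub0r normrN.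
  rewrite /=.
  have tele : g (h + x) - g x = \sum_(i < n) (g (x + Pk i.+1 h) - g (x + Pk i h)).
    rewrite -(big_mkord xpredT (fun k => g (x + Pk k.+1 h) - g (x + Pk k h))).
    by rewrite telescope_sumr // Pkn Pk0 addr0 (addrC h x).
  have eqsum : g (h + x) - (g x + Lf h) =
      \sum_(i < n) (g (x + Pk i.+1 h) - g (x + Pk i h) - h 0 i * a i).
    by rewrite sumrB -tele opprD addrA.
  have -> : (g \o +%R^~ x - (cst (g x) + Lf)) h = g (h + x) - (g x + Lf h) by [].
  rewrite eqsum; apply: (le_trans (ler_norm_sum _ _ _)).
  apply: (@le_trans _ _ (\sum_(i < n) (e' * `|h|))).
    apply: ler_sum => i _.
    pose y := x + Pk i h.
    pose psi := fun s : R => g (s *: ebasis R i + y).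
    have inB (s : R) : `|s| <= `|h 0 i| -> (ball x r (s *: ebasis R i + y) /\
        forall j, `|a j - pd j g (s *: ebasis R i + y)| < e').
      move=> hs; apply: delH; rewrite -ball_normE /=.
      have -> : x - (s *: ebasis R i + y) = - (Pk i h + s *: ebasis R i).
        by apply/rowP => j; rewrite !mxE; ring.
      by rewrite normrN (le_lt_trans _ hd') // Pk_norm.
    have [c [hc eqc]] : exists c, `|c| <= `|h 0 i| /\ psi (h 0 i) - psi 0 = 'D_1 psi c * h 0 i.
      apply: MVT0 => s hs; apply/line_derivable.
      exact: (dg _ (inB s hs).1 i).
    have f1 : g (x + Pk i.+1 h) = psi (h 0 i) by rewrite /psi PkS addrA addrC.
    have f0 : g (x + Pk i h) = psi 0 by rewrite /psi scale0r add0r.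
    rewrite f1 f0 eqc /psi line_derive.
    have -> : 'D_(ebasis R i) g (c *: ebasis R i + y) * h 0 i - h 0 i * a i =
        - (h 0 i * (a i - pd i g (c *: ebasis R i + y))) by rewrite /pd; ring.
    rewrite normrN normrM mulrC ler_pM //; first exact: ltW ((inB c hc).2 i).
    exact: entry_le_norm.
  rewrite sumr_const card_ord -mulr_natl mulrA ler_wpM2r // /e' mulrA ler_pdivrMr ?ltr_wpDl //.
  nra.
have dL := diff_unique Lc Hexp.
by apply/diff_locallyP; rewrite dL; split.
Unshelve. all: by end_near. Qed.
Lemma D_lin (g : V -> R) (z v : V) : differentiable g z ->
  'D_v g z = \sum_i v 0 i * pd i g z.
Proof.
move=> dg; rewrite deriveE // {1}(row_sum_delta v) linear_sum; apply: eq_bigr => i _.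
by rewrite linearZ /= -deriveE.
Qed.

Lemma D_coord (z w : V) i : 'D_w (fun t : V => t 0 i) z = w 0 i.
Proof.
apply/lim_near_cst => //=; near=> h.
have h0 : h != 0 by near: h; exact: nbhs_dnbhs_neq.
by rewrite !mxE /GRing.scale /= addrK mulrA mulVf // mul1r.
Unshelve. all: by end_near. Qed.

Lemma D_icoord (z w : V) i : z 0 i != 0 ->
  'D_w (fun t : V => (t 0 i)^-1) z = - w 0 i / (z 0 i) ^+ 2.
Proof.
move=> z0; rewrite deriveV //; last exact/diff_derivable/differentiable_coord.
rewrite (_ : 'D_w _ z = w 0 i); last exact: D_coord.
have -> : - z 0 i ^- 2 *: w 0 i = - z 0 i ^- 2 * w 0 i by [].
by rewrite !mulNr mulrC.
Qed.

Lemma GP_conv (x y : V) t : Gamma_plus x -> Gamma_plus y -> 0 <= t <= 1 ->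
  Gamma_plus ((1 - t) *: x + t *: y).
Proof.
move=> Hx Hy /andP[t0 t1] i; rewrite !mxE.
have := Hx i; have := Hy i; nra.
Qed.

Lemma GP_ne0 (z : V) i : Gamma_plus z -> z 0 i != 0.
Proof. by move=> Hz; rewrite gt_eqF // Hz. Qed.

Lemma vinvE (z : V) : vinv z = \sum_i (z 0 i)^-1 *: ebasis R i.
Proof.
apply/rowP => j; rewrite !mxE summxE (bigD1 j) //= big1 ?addr0; last first.
  by move=> i /negbTE ij; rewrite !mxE eq_sym ij mulr0.
by rewrite !mxE !eqxx mulr1.
Qed.

Lemma GP_vinv (z : V) : Gamma_plus z -> Gamma_plus (vinv z).
Proof. by move=> Hz i; rewrite mxE invr_gt0. Qed.

Lemma vinvK (z : V) : vinv (vinv z) = z.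
Proof. by apply/rowP => i; rewrite !mxE invrK. Qed.

Lemma vinv_diff (y : V) : Gamma_plus y -> differentiable (@vinv R n) y.
Proof.
move=> Hy.
rewrite (_ : @vinv R n = \sum_i (fun z : V => (z 0 i)^-1 *: ebasis R i)); last first.
  by rewrite fct_sumE; apply/funext => z; rewrite vinvE.
apply: differentiable_sum => i; apply: differentiableZl.
apply: differentiableV; first exact: differentiable_coord.
exact: GP_ne0.
Qed.
Lemma vinv_D (y w : V) : Gamma_plus y ->
  'D_w (@vinv R n) y = \row_i (- w 0 i / (y 0 i)^+2).
Proof.
move=> Hy; rewrite derive_mx; last exact/diff_derivable/vinv_diff.
apply/rowP => i; rewrite !mxE.
rewrite (_ : (fun t => vinv t 0 i) = fun t : V => (t 0 i)^-1).
  exact/D_icoord/GP_ne0.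
by apply/funext => t; rewrite mxE.
Qed.

Lemma chain_vinv (g : V -> R) (y w : V) : Gamma_plus y -> differentiable g (vinv y) ->
  'D_w (g \o @vinv R n) y = \sum_i (- w 0 i / (y 0 i)^+2) * pd i g (vinv y).
Proof.
move=> Hy dg; have dv := vinv_diff y Hy.
rewrite deriveE; last exact: differentiable_comp.
rewrite diff_comp //= -(@deriveE _ _ _ _ y w dv) -deriveE // vinv_D // D_lin //.
by apply: eq_bigr => i _; rewrite mxE.
Qed.
Lemma C1_on (g : V -> R) :
  (forall z, Gamma_plus z -> forall v, derivable g z v) ->
  (forall z i, Gamma_plus z -> {for z, continuous (pd i g)}) ->
  forall z, Gamma_plus z -> differentiable g z.
Proof.
move=> dg cg z Hz.
have /nbhs_ballP[r r0 rH] := GP_nbhs z Hz.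
apply: (C1_diff g z r r0).
  by move=> y /rH Hy i; apply: dg.
by move=> i; apply: cg.
Qed.

Variable f : V -> R.
Hypothesis Hs : smooth_on (@Gamma_plus R n) f.

Lemma f_der z v : Gamma_plus z -> derivable f z v.
Proof. by move=> Hz; exact: ((Hs [::] z Hz).2 v). Qed.

Lemma pdf_der j z v : Gamma_plus z -> derivable (pd j f) z v.
Proof. by move=> Hz; exact: ((Hs [:: ebasis R j] z Hz).2 v). Qed.

Lemma pdf_cont i z : Gamma_plus z -> {for z, continuous (pd i f)}.
Proof. by move=> Hz; exact: ((Hs [:: ebasis R i] z Hz).1). Qed.

Lemma pdpdf_cont i j z : Gamma_plus z -> {for z, continuous (pd i (pd j f))}.
Proof. by move=> Hz; exact: ((Hs [:: ebasis R i; ebasis R j] z Hz).1). Qed.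

Lemma f_diff z : Gamma_plus z -> differentiable f z.
Proof.
apply: C1_on => [y v Hy|y i Hy]; [exact: f_der|exact: pdf_cont].
Qed.

Lemma pdf_diff j z : Gamma_plus z -> differentiable (pd j f) z.
Proof.
apply: C1_on => [y v Hy|y i Hy]; [exact: pdf_der|exact: pdpdf_cont].
Qed.
Lemma DDf z v : Gamma_plus z -> derivable ('D_v f) z v /\
  'D_v ('D_v f) z = \sum_i \sum_j v 0 i * v 0 j * pd j (pd i f) z.
Proof.
move=> Hz.
pose G := \sum_i (v 0 i *: pd i f).
have eqG : \forall w \near z, G w = 'D_v f w.
  apply: filterS (GP_nbhs z Hz) => w Hw.
  by rewrite /G fct_sumE /= D_lin //; exact: f_diff.
have dG : derivable G z v.
  by apply: derivable_sum => i; apply: derivableZ; exact: pdf_der.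
split; first exact: (near_eq_derivable eqG dG).
rewrite -(near_eq_derive v eqG) derive_sum; last first.
  by move=> i; apply: derivableZ; exact: pdf_der.
apply: eq_bigr => i _; rewrite deriveZ; last exact: pdf_der.
rewrite D_lin; last exact: pdf_diff.
rewrite /GRing.scale /= mulr_sumr; apply: eq_bigr => j _; ring.
Qed.

Lemma quad_form (A : 'M[R]_n) (v : V) :
  (v *m A *m v^T) 0 0 = \sum_i \sum_j v 0 i * v 0 j * A i j.
Proof.
rewrite !mxE; under eq_bigr do rewrite !mxE mulr_suml.
rewrite exchange_big /=; apply: eq_bigr => i _; apply: eq_bigr => j _.
by ring.
Qed.

Lemma DDf_hess z v : Gamma_plus z -> 'D_v ('D_v f) z = (v *m hessian f z *m v^T) 0 0.
Proof.
move=> Hz; rewrite quad_form (DDf z v Hz).2 exchange_big /=.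
apply: eq_bigr => i _; apply: eq_bigr => j _; rewrite mxE; ring.
Qed.
Definition cI (i : 'I_n) : V -> R := fun z : V => (z 0 i)^-1.
Definition cw (w : V) (i : 'I_n) : V -> R := cst (w 0 i) * (cI i * cI i).
Definition Pf (i : 'I_n) : V -> R := pd i f \o (@vinv R n).
Definition Fst1 (w : V) : V -> R := \sum_i (cw w i * Pf i).

Lemma cwPf_val w i y : (cw w i * Pf i) y = w 0 i * ((y 0 i)^-1 * (y 0 i)^-1) * pd i f (vinv y).
Proof. by []. Qed.

Lemma cw_val w i y : cw w i y = w 0 i * ((y 0 i)^-1 * (y 0 i)^-1).
Proof. by []. Qed.

Lemma cI_diff i y : Gamma_plus y -> differentiable (cI i) y.
Proof.
move=> Hy; apply: differentiableV; first exact: differentiable_coord.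
exact: GP_ne0.
Qed.

Lemma cw_diff w i y : Gamma_plus y -> differentiable (cw w i) y.
Proof.
move=> Hy; apply: differentiableM => //.
by apply: differentiableM; apply: cI_diff.
Qed.

Lemma Pf_diff i y : Gamma_plus y -> differentiable (Pf i) y.
Proof.
move=> Hy; apply: differentiable_comp; first exact: vinv_diff.
by apply: pdf_diff; apply: GP_vinv.
Qed.

Lemma Dfstar y w : Gamma_plus y -> 'D_w (fstar f) y = Fst1 w y.
Proof.
move=> Hy.
have dfv : differentiable (f \o @vinv R n) y.
  apply: differentiable_comp; first exact: vinv_diff.
  by apply: f_diff; apply: GP_vinv.
rewrite (_ : fstar f = - (f \o @vinv R n)); last by apply/funext.
rewrite deriveN; last exact: diff_derivable.
rewrite chain_vinv //; last by apply: f_diff; apply: GP_vinv.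
rewrite /Fst1 fct_sumE -sumrN; apply: eq_bigr => i _.
rewrite cwPf_val.
have := GP_ne0 y i Hy => y0.
by field.
Qed.
Lemma Dcw w i y : Gamma_plus y -> 'D_w (cw w i) y = - 2 * (w 0 i)^+2 / (y 0 i)^+3.
Proof.
move=> Hy; have y0 := GP_ne0 y i Hy.
have dI : derivable (cI i) y w by apply/diff_derivable/cI_diff.
rewrite /cw deriveM; last 2 first.
- exact: derivable_cst.
- exact: derivableM.
rewrite derive_cst scaler0 addr0 deriveM // /cI D_icoord //.
rewrite /GRing.scale /=.
by field.
Qed.

Lemma DDfstar y w : Gamma_plus y -> derivable ('D_w (fstar f)) y w /\
  'D_w ('D_w (fstar f)) y = \sum_i (w 0 i * ((y 0 i)^-1 * (y 0 i)^-1) *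
     (\sum_j (- w 0 j / y 0 j ^+ 2) * pd j (pd i f) (vinv y))
     - 2 * (w 0 i)^+2 / (y 0 i)^+3 * pd i f (vinv y)).
Proof.
move=> Hy.
have eqF : \forall z \near y, Fst1 w z = 'D_w (fstar f) z.
  by apply: filterS (GP_nbhs y Hy) => z Hz; rewrite Dfstar.
have dT i : derivable (cw w i * Pf i) y w.
  by apply: derivableM; apply: diff_derivable; [apply: cw_diff|apply: Pf_diff].
have dF : derivable (Fst1 w) y w by apply: derivable_sum.
split; first exact: (near_eq_derivable eqF dF).
rewrite -(near_eq_derive w eqF) /Fst1 derive_sum //; apply: eq_bigr => i _.
rewrite deriveM; last 2 first.
- exact/diff_derivable/cw_diff.
- exact/diff_derivable/Pf_diff.
rewrite Dcw // /Pf chain_vinv //; last by apply: pdf_diff; apply: GP_vinv.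
rewrite cw_val /GRing.scale /=.
have y0 := GP_ne0 y i Hy.
by field.
Qed.
Lemma fstar_der z v : Gamma_plus z -> derivable (fstar f) z v.
Proof.
move=> Hz; rewrite (_ : fstar f = - (f \o @vinv R n)); last by apply/funext.
apply: derivableN; apply: diff_derivable; apply: differentiable_comp.
  exact: vinv_diff.
by apply: f_diff; apply: GP_vinv.
Qed.

Definition Dg (x : V) : 'M[R]_n := \matrix_(i, j) (if i == j then 2 * pd i f x / x 0 i else 0).

Lemma Q3 y w : Gamma_plus y ->
  'D_w ('D_w (fstar f)) y = - ((\row_i (w 0 i / (y 0 i)^+2)) *m
     (hessian f (vinv y) + Dg (vinv y)) *m (\row_i (w 0 i / (y 0 i)^+2))^T) 0 0.
Proof.
move=> Hy; rewrite (DDfstar y w Hy).2 quad_form.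
set x := vinv y; set v := \row_i _.
have vE i : v 0 i = w 0 i / (y 0 i)^+2 by rewrite mxE.
have xE i : x 0 i = (y 0 i)^-1 by rewrite mxE.
rewrite sumrB.
have eA : \sum_i w 0 i * ((y 0 i)^-1 * (y 0 i)^-1) *
     (\sum_j (- w 0 j / y 0 j ^+ 2) * pd j (pd i f) x) =
    - \sum_i \sum_j v 0 i * v 0 j * hessian f x i j.
  rewrite [in RHS]exchange_big /= -sumrN; apply: eq_bigr => i _.
  rewrite mulr_sumr -sumrN; apply: eq_bigr => j _.
  rewrite !mxE.
  have := GP_ne0 y i Hy; have := GP_ne0 y j Hy => y0 y1.
  by field; rewrite ?y0 ?y1.
have eB : \sum_i 2 * w 0 i ^+ 2 / y 0 i ^+ 3 * pd i f x =
    \sum_i v 0 i * v 0 i * (2 * pd i f x / x 0 i).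
  apply: eq_bigr => i _; rewrite vE xE.
  have := GP_ne0 y i Hy => y0.
  by field.
have eC : \sum_i \sum_j v 0 i * v 0 j * (hessian f x + Dg x) i j =
    \sum_i \sum_j v 0 i * v 0 j * hessian f x i j +
    \sum_i v 0 i * v 0 i * (2 * pd i f x / x 0 i).
  rewrite -big_split; apply: eq_bigr => i _ /=.
  rewrite (eq_bigr (fun j => v 0 i * v 0 j * hessian f x i j + v 0 i * v 0 j * Dg x i j));
    last by move=> j _; rewrite [(hessian f x + Dg x) i j]mxE mulrDr.
  rewrite big_split /=; congr (_ + _).
  rewrite (bigD1 i) //= big1 ?addr0; first by rewrite /Dg !mxE eqxx.
  by move=> j /negbTE ji; rewrite /Dg !mxE eq_sym ji mulr0.
by rewrite eA eB eC opprD.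
Qed.
End S.

Theorem theorem2p1 (R : realType) (n : nat) (f : 'rV[R]_n -> R) :
  smooth_on (@Gamma_plus R n) f -> homogeneous1 f ->
  (class_C f <->
   forall x : 'rV[R]_n, Gamma_plus x ->
     [/\ forall i : 'I_n, 0 < pd i f x,
         nonpos_mx (hessian f x) &
         nonneg_mx (hessian f x +
                    \matrix_(i, j) (if i == j then 2 * pd i f x / x 0 i else 0))]).
Proof.
move=> Hs Hh.
have hc := @concave_iff R n (@Gamma_plus R n) f (@GP_nbhs R n) (@GP_conv R n)
  (fun z v Hz => conj (@f_der R n f Hs z v Hz) (@DDf R n f Hs z v Hz).1).
have hcs := @concave_iff R n (@Gamma_plus R n) (fstar f) (@GP_nbhs R n) (@GP_conv R n)
  (fun z v Hz => conj (@fstar_der R n f Hs z v Hz) (@DDfstar R n f Hs z v Hz).1).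
split.
- case=> _ _ Hinc Hconc Hinv x Hx; split.
  + exact: Hinc x Hx.
  + move=> v; rewrite -(@DDf_hess R n f Hs x v Hx).
    exact: (hc.1 Hconc x v Hx).
  + move=> v.
    pose y := vinv x.
    have Hy : Gamma_plus y by apply: (@GP_vinv R n x Hx).
    pose w := \row_i (v 0 i * (y 0 i) ^+ 2).
    have := hcs.1 Hinv y w Hy.
    rewrite (@Q3 R n f Hs y w Hy) oppr_le0.
    have -> : \row_i (w 0 i / y 0 i ^+ 2) = v.
      apply/rowP => i; rewrite !mxE.
      have := @GP_ne0 R n x i Hx => x0.
      by field.
    by rewrite /y vinvK.
- move=> H; split => //.
  + by move=> x Hx i; case: (H x Hx).
  + apply/hc.2 => z v Hz; rewrite (@DDf_hess R n f Hs z v Hz).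
    by case: (H z Hz).
  + apply/hcs.2 => y w Hy; rewrite (@Q3 R n f Hs y w Hy) oppr_le0.
    by case: (H (vinv y) (@GP_vinv R n y Hy)).
Qed.
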